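(* Let $G$ be a finite simple graph on $n$ vertices with minimum degree $\delta(G)\geq 1$. Then $f_o(G)\geq \frac{n}{10000}$; that is, there is a set $V_0\subseteq V(G)$ with $|V_0|\geq n/10000$ such that every vertex of the induced subgraph $G[V_0]$ has odd degree in $G[V_0]$.
   Context: For a graph $G$, $f_o(G)$ denotes the maximum of $|V_0|$ over all $V_0\subseteq V(G)$ such that the induced subgraph $G[V_0]$ has all degrees odd. *)

(* Defs.v *)
From mathcomp Require Import all_boot.
Set Implicit Arguments. Unset Strict Implicit. Unset Printing Implicit Defensive.

Definition simple_graph (T : finType) (e : rel T) : Prop :=
  symmetric e /\ irreflexive e.

Definition ind_deg (T : finType) (e : rel T) (V0 : {set T}) (x : T) : nat :=
  #|[set y in V0 | e x y]|.

Definition all_odd_induced (T : finType) (e : rel T) (V0 : {set T}) : bool :=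
  [forall x in V0, odd (ind_deg e V0 x)].

Definition min_deg_ge1 (T : finType) (e : rel T) : Prop :=
  forall x : T, exists y : T, e x y.

(* Main.v *)
Require Import Defs.
From mathcomp Require Import all_boot zify.
Set Implicit Arguments. Unset Strict Implicit. Unset Printing Implicit Defensive.

Section Bx.
Variable T : finType.

Definition bx (A : {set T}) (p : T -> bool) := \big[addb/false]_(y in A) p y.

Lemma card_sum_nat (A : {set T}) (p : T -> bool) :
  #|[set y in A | p y]| = \sum_(y in A) (p y : nat).
Proof.
rewrite -sum1dep_card big_mkcondr /=.
by apply: eq_bigr => y _; case: (p y).
Qed.

Lemma odd_card_bx (A : {set T}) (p : T -> bool) :
  odd #|[set y in A | p y]| = bx A p.
Proof.
rewrite card_sum_nat (big_morph odd oddD (erefl : odd 0 = false)).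
by apply: eq_bigr => y _; case: (p y).
Qed.

Lemma bx_ext (A : {set T}) p q : (forall y, y \in A -> p y = q y) -> bx A p = bx A q.
Proof. by move=> H; apply: eq_bigr. Qed.

Lemma bx_xor (A : {set T}) p q : bx A (fun y => p y (+) q y) = bx A p (+) bx A q.
Proof. by rewrite /bx big_split. Qed.

Lemma bx_andl (A : {set T}) b p : bx A (fun y => b && p y) = b && bx A p.
Proof. by case: b => //=; rewrite /bx big1. Qed.

Lemma bx0 (A : {set T}) p : (forall y, y \in A -> p y = false) -> bx A p = false.
Proof. by move=> H; rewrite /bx big1. Qed.

Lemma bxU1 (A : {set T}) a p : a \notin A -> bx (a |: A) p = p a (+) bx A p.
Proof. by move=> H; rewrite /bx big_setU1. Qed.

Lemma bxD1 (A : {set T}) a p : a \in A -> bx A p = p a (+) bx (A :\ a) p.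
Proof. by move=> H; rewrite /bx (big_setD1 a H). Qed.

Lemma bxID (A B : {set T}) p : bx A p = bx (A :&: B) p (+) bx (A :\: B) p.
Proof. by rewrite /bx (big_setID B). Qed.

Lemma bx_del (A : {set T}) x p : x \in A ->
  bx A (fun y => p y && (x != y)) = bx A p (+) p x.
Proof.
move=> xA; rewrite (bxD1 _ xA) [bx A p](bxD1 _ xA) eqxx andbF /=.
rewrite (@bx_ext (A :\ x) _ p); first by rewrite addbC addbA addbb.
by move=> y; rewrite !inE => /andP [/negPf]; rewrite eq_sym => ->; rewrite andbT.
Qed.

Lemma bx_sep (A : {set T}) q p : bx [set x in A | q x] p = bx A (fun x => q x && p x).
Proof.
rewrite /bx big_mkcond [RHS]big_mkcond /=.
by apply: eq_bigr => y _; rewrite !inE; case: (y \in A); case: (q y).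
Qed.

Lemma bx_exch (A B : {set T}) (f : T -> T -> bool) :
  bx A (fun x => bx B (f x)) = bx B (fun y => bx A (fun x => f x y)).
Proof. by rewrite /bx exchange_big. Qed.

Lemma bxU (A B : {set T}) p : [disjoint A & B] -> bx (A :|: B) p = bx A p (+) bx B p.
Proof.
move=> dAB; rewrite (bxID _ A) setIUl setIid setDUl setDv set0U.
have -> : B :&: A = set0 by apply/setP=> y; rewrite !inE; apply/andP=> -[yB yA];
  move/disjointFr: dAB => /(_ y yA); rewrite yB.
rewrite setU0.
have -> : B :\: A = B.
  apply/setP=> y; rewrite !inE; case yB: (y \in B); rewrite ?andbF ?andbT //.
  by apply/negP => yA; move/disjointFr: dAB => /(_ y yA); rewrite yB.
done.
Qed.

Definition evenS (h : rel T) (A : {set T}) := forall x, x \in A -> bx A (h x) = false.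

Lemma gallai_step (h : rel T) (Y : {set T}) v (A B : {set T}) :
  symmetric h -> irreflexive h ->
  let N := [set y in Y | h v y] in
  let h' := fun a b => h a b (+) [&& a \in N, b \in N & a != b] in
  A \subset Y -> B \subset Y -> v \notin A ->
  evenS h' A -> evenS h' B -> bx A (h v) = false -> bx B (h v) = true ->
  evenS h (v |: A) /\ evenS h B.
Proof.
move=> hs hi N h' sAY sBY vA eA eB pA pB.
have key : forall (C : {set T}) a, C \subset Y -> a \in C -> evenS h' C ->
   bx C (h a) = (a \in N) && ~~ bx C (h v).
  move=> C a sCY aC eC.
  rewrite (@bx_ext C (h a) (fun y => h' a y (+) [&& a \in N, y \in N & a != y])); last first.
    by move=> y _; rewrite /h' addbK.
  rewrite bx_xor (eC a aC) /=.
  rewrite bx_andl bx_del //.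
  rewrite (@bx_ext C (fun y => y \in N) (h v)); last first.
    by move=> y yC; rewrite inE (subsetP sCY y yC).
  by case: (a \in N) => //=; rewrite addbT.
split.
- move=> x; rewrite in_setU1 => /orP [/eqP -> | xA].
    by rewrite bxU1 // hi pA.
  have xY := subsetP sAY x xA.
  rewrite bxU1 //.
  rewrite (key A x sAY xA eA) pA /= hs.
  have -> : h v x = (x \in N) by rewrite inE xY.
  by rewrite andbT addbb.
- move=> x xB; by rewrite (key B x sBY xB eB) pB andbF.
Qed.
End Bx.

Section G.
Variable T : finType.

Lemma gallai_n n (h : rel T) (Y : {set T}) : #|Y| <= n -> symmetric h -> irreflexive h ->
  exists T1 : {set T}, T1 \subset Y /\ evenS h T1 /\ evenS h (Y :\: T1).
Proof.
elim: n h Y => [|n IH] h Y hY hs hi;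
 (case: (boolP [forall x in Y, ~~ bx Y (h x)]) => [/forall_inP allE | /forall_inPn [v vY /negPn pv]];
  [exists Y; split; [exact: subxx | split; [by move=> x xY; exact/negbTE/(allE x xY) |
     by move=> x; rewrite setDv inE]] | ]).
  have : 0 < #|Y| by apply/card_gt0P; exists v.
  lia.
pose N := [set y in Y | h v y].
pose h' := fun a b => h a b (+) [&& a \in N, b \in N & a != b].
have hs' : symmetric h'.
  by move=> a b; rewrite /h' hs eq_sym; congr (_ (+) _); rewrite andbA andbA [(a \in N) && _]andbC.
have hi' : irreflexive h' by move=> a; rewrite /h' hi eqxx !andbF.
have cY : #|Y :\ v| <= n by move: hY; rewrite (cardsD1 v Y) vY; lia.
have [A [sAY' [eA eB]]] := IH h' (Y :\ v) cY hs' hi'.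
set B := (Y :\ v) :\: A in eB.
have sYv : Y :\ v \subset Y by exact: subsetDl.
have sAY : A \subset Y by exact: subset_trans sAY' sYv.
have sBY : B \subset Y by exact: subset_trans (subsetDl _ _) sYv.
have vA : v \notin A by apply/negP => /(subsetP sAY'); rewrite !inE eqxx.
have vB : v \notin B by rewrite /B !inE eqxx /= !andbF.
have par : bx A (h v) (+) bx B (h v) = true.
  move: pv; rewrite (bxD1 _ vY) hi /= (bxID _ A).
  by rewrite (setIidPr sAY').
case pAv: (bx A (h v)); move: par; rewrite pAv => par.
- have pBv : bx B (h v) = false by move: par; case: (bx B (h v)).
  have [e1 e2] := gallai_step hs hi sBY sAY vB eB eA pBv pAv.
  exists A; split; first exact: sAY.
  split; first exact: e2.
  have -> : Y :\: A = v |: B; last exact: e1.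
  apply/setP => x; rewrite !inE.
  case: (eqVneq x v) => [-> | xv] /=; first by rewrite vY (negPf vA).
  by rewrite andbC.
- have [e1 e2] := gallai_step hs hi sAY sBY vA eA eB pAv par.
  exists (v |: A); split; first by rewrite subUset sub1set vY sAY.
  split; first exact: e1.
  have -> : Y :\: (v |: A) = B; last exact: e2.
  apply/setP => x; rewrite !inE.
  case: (eqVneq x v) => [-> | xv] /=; first by rewrite andbF.
  by rewrite andbC.
Qed.

Lemma gallai (h : rel T) (Y : {set T}) : symmetric h -> irreflexive h ->
  exists T1 : {set T}, T1 \subset Y /\ evenS h T1 /\ evenS h (Y :\: T1).
Proof. exact: (@gallai_n #|Y|). Qed.
End G.

Section R.
Variable T : finType.
Variable e : rel T.
Hypothesis hs : symmetric e.
Hypothesis hi : irreflexive e.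

Definition indep (I : {set T}) := forall x y, x \in I -> y \in I -> e x y = false.
Definition hR (X : {set T}) : rel T :=
  fun t u => (t != u) && (e t u (+) bx X (fun x => e t x && e u x)).

Lemma hR_sym X : symmetric (hR X).
Proof.
move=> a b; rewrite /hR eq_sym hs; congr (_ && (_ (+) _)).
by apply: bx_ext => x _; rewrite andbC.
Qed.

Lemma hR_irr X : irreflexive (hR X).
Proof. by move=> a; rewrite /hR eqxx. Qed.

Lemma S_odd (I X Y T0 : {set T}) : indep I -> X \subset I ->
  (forall y, y \in Y -> y \notin I) -> (forall y, y \in Y -> bx X (e y) = true) ->
  T0 \subset Y -> evenS (hR X) T0 ->
  all_odd_induced e (T0 :|: [set x in X | bx T0 (e x)]).
Proof.
move=> iI sXI YI Yodd sTY ev.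
set XT := [set x in X | bx T0 (e x)].
have sXTI : XT \subset I by apply: subset_trans sXI; apply/subsetP => x; rewrite inE => /andP [].
have dis : [disjoint T0 & XT].
  rewrite disjoint_subset; apply/subsetP => x xT; rewrite inE; apply/negP => xXT.
  by move: (YI x (subsetP sTY x xT)); rewrite (subsetP sXTI x xXT).
apply/forall_inP => z zS.
rewrite /ind_deg odd_card_bx bxU //.
move: zS; rewrite inE => /orP [zT | zX].
- have zY := subsetP sTY z zT.
  rewrite /XT bx_sep.
  rewrite (@bx_ext _ X (fun x => bx T0 (e x) && e z x) (fun x => bx T0 (fun u => e z x && e x u))); last first.
    by move=> x _; rewrite andbC bx_andl.
  rewrite bx_exch -bx_xor.
  rewrite (@bx_ext _ T0 _ (fun u => (e z u (+) bx X (fun x => e z x && e u x)))); last first.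
    by move=> u _; congr (_ (+) _); apply: bx_ext => x _; rewrite (hs x u).
  have := ev z zT; rewrite /hR.
  rewrite (@bx_ext _ T0 _ (fun u => (e z u (+) bx X (fun x => e z x && e u x)) && (z != u))); last first.
    by move=> u _; rewrite andbC.
  rewrite bx_del // hi /=.
  rewrite (@bx_ext _ X (fun x => e z x && e z x) (e z)); last by move=> x _; rewrite andbb.
  by rewrite Yodd //; case: (bx T0 _).
- have zX' : z \in X by move: zX; rewrite inE => /andP [].
  have zI := subsetP sXTI z zX.
  rewrite (@bx0 _ XT); last by move=> y yXT; exact: (iI _ _ zI (subsetP sXTI y yXT)).
  by move: zX; rewrite inE => /andP [_ ->].
Qed.

Lemma lemR (I X Y : {set T}) : indep I -> X \subset I ->
  (forall y, y \in Y -> y \notin I) -> (forall y, y \in Y -> bx X (e y) = true) ->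
  exists S : {set T}, all_odd_induced e S /\
     #|Y| + #|[set x in X | bx Y (e x)]| <= 2 * #|S|.
Proof.
move=> iI sXI YI Yodd.
have [T1 [sT1 [e1 e2]]] := gallai Y (hR_sym X) (hR_irr X).
set T2 := Y :\: T1 in e2.
have sT2 : T2 \subset Y by exact: subsetDl.
have o1 := S_odd iI sXI YI Yodd sT1 e1.
have o2 := S_odd iI sXI YI Yodd sT2 e2.
have cardS : forall T0 : {set T}, T0 \subset Y ->
    #|T0 :|: [set x in X | bx T0 (e x)]| = #|T0| + #|[set x in X | bx T0 (e x)]|.
  move=> T0 sT0; rewrite -cardsUI.
  suff -> : T0 :&: [set x in X | bx T0 (e x)] = set0 by rewrite cards0 addn0.
  apply/setP => x; rewrite !inE; apply/negP => /and3P [xT xX _].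
  by move: (YI x (subsetP sT0 x xT)); rewrite (subsetP sXI x xX).
have cY : #|T1| + #|T2| = #|Y|.
  by rewrite -(cardsID T1 Y) (setIidPr sT1).
have cX : #|[set x in X | bx Y (e x)]| <=
          #|[set x in X | bx T1 (e x)]| + #|[set x in X | bx T2 (e x)]|.
  apply: leq_trans (_ : #|[set x in X | bx T1 (e x)] :|: [set x in X | bx T2 (e x)]| <= _).
    apply: subset_leq_card; apply/subsetP => x; rewrite !inE => /andP [xX].
    rewrite (bxID _ T1) (setIidPr sT1) -/T2 xX /=.
    by case: (bx T1 (e x)); case: (bx T2 (e x)).
  by rewrite cardsU leq_subr.
move: (cardS T1 sT1) (cardS T2 sT2) => c1 c2.
case: (leqP #|T1 :|: [set x in X | bx T1 (e x)]| #|T2 :|: [set x in X | bx T2 (e x)]|) => H.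
- by exists (T2 :|: [set x in X | bx T2 (e x)]); split => //; lia.
- by exists (T1 :|: [set x in X | bx T1 (e x)]); split => //; lia.
Qed.
End R.

Section Avg.
Variable T : finType.
Variable e : rel T.

Lemma half (I : {set T}) j i0 : i0 \in I -> e j i0 ->
  2 * #|[set X in powerset I | bx X (e j)]| = #|powerset I|.
Proof.
move=> i0I eji.
pose phi := fun X : {set T} => if i0 \in X then X :\ i0 else i0 |: X.
have phiK : cancel phi phi.
  move=> X; rewrite /phi; case: (boolP (i0 \in X)) => iX.
    by rewrite !inE eqxx /= setD1K.
  by rewrite setU11 setU1K.
have phiB : forall X, bx (phi X) (e j) = ~~ bx X (e j).
  move=> X; rewrite /phi; case: (boolP (i0 \in X)) => iX.
    by rewrite [bx X _](bxD1 _ iX) eji addTb negbK.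
  by rewrite bxU1 // eji.
have phiP : forall X, (phi X \subset I) = (X \subset I).
  move=> X; rewrite /phi; case: (boolP (i0 \in X)) => iX.
    apply/idP/idP => H; last exact: subset_trans (subsetDl _ _) H.
    apply/subsetP => x xX; case: (eqVneq x i0) => [-> // | xi].
    by apply: (subsetP H); rewrite !inE xi.
  by rewrite subUset sub1set i0I.
set P := powerset I.
set O := [set X in P | bx X (e j)].
set E := P :\: O.
have sOP : O \subset P by apply/subsetP => X; rewrite inE => /andP [].
have c1 : #|O| <= #|E|.
  rewrite -(card_imset _ (can_inj phiK)); apply: subset_leq_card.
  apply/subsetP => Y /imsetP [X]; rewrite !inE => /andP [XP bX] ->.
  by rewrite phiP XP phiB bX.
have c2 : #|E| <= #|O|.
  rewrite -(card_imset _ (can_inj phiK)); apply: subset_leq_card.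
  apply/subsetP => Y /imsetP [X]; rewrite !inE => /andP [/nandP bX XP] ->.
  rewrite phiP XP phiB /=.
  by case: bX => //; rewrite XP.
have c3 : #|O| + #|E| = #|P| by rewrite -(cardsID O P) (setIidPr sOP).
lia.
Qed.

Lemma avg (I J : {set T}) : (forall j, j \in J -> exists i, i \in I /\ e j i) ->
  exists X : {set T}, X \subset I /\ #|J| <= 2 * #|[set j in J | bx X (e j)]|.
Proof.
move=> HJ.
set P := powerset I.
case: (boolP [exists X in P, #|J| <= 2 * #|[set j in J | bx X (e j)]|]).
  by move=> /exists_inP [X XP H]; exists X; split => //; rewrite -powersetE.
move=> /exists_inPn H; exfalso.
have sum1 : \sum_(X in P) #|[set j in J | bx X (e j)]| =
            \sum_(j in J) #|[set X in P | bx X (e j)]|.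
  under eq_bigr => X _ do rewrite card_sum_nat.
  rewrite exchange_big /=.
  by apply: eq_bigr => j _; rewrite card_sum_nat.
have sum2 : 2 * \sum_(j in J) #|[set X in P | bx X (e j)]| = #|J| * #|P|.
  rewrite big_distrr /=.
  rewrite (eq_bigr (fun _ => #|P|)) ?sum_nat_const //.
  move=> j jJ; have [i [iI eji]] := HJ j jJ; exact: half iI eji.
have Hle : \sum_(X in P) (2 * #|[set j in J | bx X (e j)]| + 1) <= \sum_(X in P) #|J|.
  apply: leq_sum => X XP; by move: (H X XP); rewrite -ltnNge addn1.
rewrite sum_nat_const big_split /= sum_nat_const -big_distrr /= sum1 sum2 in Hle.
have : 0 < #|P| by apply/card_gt0P; exists set0; rewrite powersetE sub0set.
rewrite muln1 [#|P| * _]mulnC -[X in _ <= X]addn0 leq_add2l leqn0 in Hle. by rewrite (eqP Hle).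
Qed.
End Avg.

Lemma odd_bx_of (T : finType) (e : rel T) S z : all_odd_induced e S -> z \in S -> bx S (e z) = true.
Proof. by move=> /forall_inP H zS; rewrite -odd_card_bx; exact: H. Qed.

Theorem theorem1p3 (T : finType) (e : rel T) :
  simple_graph e -> min_deg_ge1 e ->
  exists V0 : {set T}, all_odd_induced e V0 /\ #|T| <= 10000 * #|V0|.
Proof.
move=> [hs hi] md.
pose pI := fun A : {set T} => [forall x in A, forall y in A, ~~ e x y].
have p0 : pI set0 by apply/forall_inP => x; rewrite inE.
have [I mI] := ex_maxset (ex_intro pI set0 p0).
move/maxsetP: mI => [pIok maxI].
have iI : indep e I.
  move=> x y xI yI; apply/negbTE.
  by move/forall_inP: pIok => /(_ x xI) /forall_inP /(_ y yI).
have dom : forall j, j \notin I -> exists i, i \in I /\ e j i.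
  move=> j jI.
  case: (boolP [exists i in I, e j i]) => [/exists_inP [i iI' eji] | /exists_inPn Hn].
    by exists i.
  exfalso.
  have pj : pI (j |: I).
    apply/forall_inP => x; rewrite in_setU1 => /orP [/eqP -> | xI];
    apply/forall_inP => y; rewrite in_setU1 => /orP [/eqP -> | yI].
    - by rewrite hi.
    - exact: Hn.
    - by rewrite hs; exact: Hn.
    - by rewrite iI.
  have := maxI _ pj (subsetUr _ _) => eq.
  by move: jI; rewrite -eq setU11.
set J := ~: I.
have domA : forall j, j \in J -> exists i, i \in I /\ e j i.
  by move=> j; rewrite inE; exact: dom.
have [X [sXI HA]] := avg domA.
have YA1 : forall y, y \in [set j in J | bx X (e j)] -> y \notin I.
  by move=> y; rewrite !inE => /andP [].
have YA2 : forall y, y \in [set j in J | bx X (e j)] -> bx X (e y) = true.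
  by move=> y; rewrite !inE => /andP [_ ->].
have [SA [oA cA]] := lemR hs hi iI sXI YA1 YA2.
pose e' := fun x y => e x y && ((x \in I) != (y \in I)).
have hs' : symmetric e' by move=> x y; rewrite /e' hs eq_sym.
have hi' : irreflexive e' by move=> x; rewrite /e' hi.
have iJ' : indep e' J.
  by move=> x y; rewrite /e' !inE => /negPf -> /negPf ->; rewrite andbF.
have domB : forall i, i \in I -> exists j, j \in J /\ e' i j.
  move=> i iI'; have [y ey] := md i.
  have yI : y \notin I by apply/negP => yI; move: (iI i y iI' yI); rewrite ey.
  by exists y; rewrite /e' inE ey iI' (negPf yI).
have [X' [sXJ HB]] := avg domB.
have YB1 : forall y, y \in [set i in I | bx X' (e' i)] -> y \notin J.
  by move=> y; rewrite !inE negbK => /andP [].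
have YB2 : forall y, y \in [set i in I | bx X' (e' i)] -> bx X' (e' y) = true.
  by move=> y; rewrite !inE => /andP [_ ->].
have [S' [oS' cS']] := lemR hs' hi' iJ' sXJ YB1 YB2.
set X1 := S' :&: I.
set Y1 := S' :\: I.
have split' : forall z, z \in S' -> bx X1 (e' z) (+) bx Y1 (e' z) = true.
  by move=> z zS; rewrite -bxID; exact: odd_bx_of oS' zS.
have Y1odd : forall y, y \in Y1 -> bx X1 (e y) = true.
  move=> y; rewrite inE => /andP [yI yS].
  have := split' y yS.
  rewrite (@bx0 _ Y1); last first.
    by move=> w; rewrite inE /e' => /andP [/negPf wI _]; rewrite wI (negPf yI) andbF.
  rewrite addbF => <-; apply: bx_ext => w; rewrite inE => /andP [_ wI].
  by rewrite /e' wI (negPf yI) andbT.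
have X1odd : forall x, x \in X1 -> bx Y1 (e x) = true.
  move=> x; rewrite inE => /andP [xS xI].
  have := split' x xS.
  rewrite (@bx0 _ X1); last first.
    by move=> w; rewrite inE /e' => /andP [_ wI]; rewrite wI xI andbF.
  rewrite addFb => <-; apply: bx_ext => w; rewrite inE => /andP [/negPf wI _].
  by rewrite /e' wI xI andbT.
have Y11 : forall y, y \in Y1 -> y \notin I by move=> y; rewrite inE => /andP [].
have [SB [oB cB]] := lemR hs hi iI (subsetIr S' I) Y11 Y1odd.
have eqX : [set x in X1 | bx Y1 (e x)] = X1.
  by apply/setP => x; rewrite inE; case xX: (x \in X1) => //=; rewrite X1odd.
rewrite eqX in cB.
have cS : #|X1| + #|Y1| = #|S'| by rewrite cardsID.
have cT : #|I| + #|J| = #|T| by rewrite cardsC.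
have fin : forall S : {set T}, #|T| <= 12 * #|S| -> #|T| <= 10000 * #|S|.
  by move=> S h; apply: leq_trans h _; apply: leq_mul.
case: (leqP #|SA| #|SB|) => H.
- by exists SB; split => //; apply: fin; lia.
- by exists SA; split => //; apply: fin; lia.
Qed.
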